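(* Let $(G,K)$ be a Gelfand pair, $X=G/K$, and let $\Gamma=\sum_{j\in\Lambda}A_j$ be a sum of associates of the $(K\backslash G/K)$-association scheme, where $\Lambda$ indexes some subset of the associates. Then for the $i$th irreducible constituent $V_i$ of $1\uparrow^G_K$, the eigenvalue $\eta_i$ of $\Gamma$ on $V_i$ satisfies \[|\eta_i|\le\sqrt{|X|\,|\Omega_\Lambda|/d_i},\] where $d_i=\dim V_i$ and $\Omega_\Lambda=\bigcup_{j\in\Lambda}\Omega_j$.
   Context: $G$ is a finite group and $K\le G$. $(G,K)$ is a Gelfand pair if the permutation representation $\mathbb{C}[G/K]\cong 1\uparrow^G_K$ is multiplicity-free, $1\uparrow^G_K\cong\bigoplus_{i=1}^m V_i$ with pairwise inequivalent irreducibles $V_i$. The double cosets $KgK$ are indexed by $j$; the sphere $\Omega_j\subseteq X$ is the set of cosets $xK$ with $x$ in the $j$th double coset (equivalently the $K$-orbits on $X$). The associate $A_j$ is the $X\times X$ 0/1 matrix with $(A_j)_{xK,yK}=1$ iff $x^{-1}y$ lies in the $j$th double coset. Each $V_i$ (viewed inside $\mathbb{C}[X]$) is an eigenspace of every $A_j$, and $\eta_i$ is the corresponding eigenvalue of $\Gamma$. *)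

(* Defs.v *)
From HB Require Import structures.
From mathcomp Require Import all_boot all_order all_algebra all_fingroup all_field.
Set Implicit Arguments. Unset Strict Implicit. Unset Printing Implicit Defensive.
Import GRing.Theory Num.Theory.
Local Open Scope ring_scope.

Section GelfandDefs.
Variable gT : finGroupType.

Definition cosX (G K : {set gT}) : predArgType :=
  {A : {set gT} | A \in lcosets K G}.

Definition CX (G K : {set gT}) := {ffun cosX G K -> algC^o}.

Definition actX (G K : {set gT}) (g : gT) (A : cosX G K) : cosX G K :=
  insubd A (g *: val A)%g.

Definition gactCX (G K : {set gT}) (g : gT) (f : CX G K) : CX G K :=
  [ffun A => f (actX (g^-1)%g A)].

Definition Ginvariant (G K : {set gT}) (V : {vspace CX G K}) :=
  forall g, g \in G -> forall f, f \in V -> gactCX g f \in V.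

Definition irreducibleG (G K : {set gT}) (V : {vspace CX G K}) :=
  [/\ V != 0%VS, Ginvariant V &
      forall W : {vspace CX G K}, (W <= V)%VS -> Ginvariant W ->
        W = 0%VS \/ W = V].

Definition equivG (G K : {set gT}) (V W : {vspace CX G K}) :=
  exists phi : 'End(CX G K),
    [/\ (phi @: V)%VS = W, (lker phi :&: V)%VS = 0%VS &
        forall g, g \in G -> forall f, f \in V ->
          phi (gactCX g f) = gactCX g (phi f)].

(* The decomposition 1 ↑_K^G = C[X] = ⊕_{i<m} V_i into pairwise inequivalent
   irreducibles; its existence is the Gelfand pair property. *)
Definition multfree_decomposition (G K : {set gT}) (m : nat)
    (Vs : 'I_m -> {vspace CX G K}) :=
  [/\ (\sum_(i < m) Vs i)%VS = fullv, directv (\sum_(i < m) Vs i),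
      forall i, irreducibleG (Vs i) &
      forall i j, i != j -> ~ equivG (Vs i) (Vs j)].


Definition dcosets (G K : {set gT}) : {set {set gT}} :=
  [set (K :* x * K)%g | x in G].

Definition dunion (Lambda : {set {set gT}}) : {set gT} :=
  \bigcup_(D in Lambda) D.

(* Gamma = sum_{j in Lambda} A_j : (Gamma)_{xK,yK} = 1 iff x^-1 y lies in one
   of the double cosets of Lambda (well defined, independent of representatives) *)
Definition Gamma (G K : {set gT}) (Lambda : {set {set gT}}) :
    'M[algC]_#|cosX G K| :=
  \matrix_(a, b) (((repr (val (enum_val a)))^-1 * repr (val (enum_val b)))%g
                     \in dunion Lambda)%:R.

Definition Gamma_act (G K : {set gT}) (Lambda : {set {set gT}}) (f : CX G K)
    : CX G K :=
  [ffun A => \sum_(B : cosX G K)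
     Gamma G K Lambda (enum_rank A) (enum_rank B) * f B].

(* Omega_Lambda = union of the spheres Omega_j, j in Lambda : cosets xK with
   x in one of the double cosets of Lambda *)
Definition OmegaL (G K : {set gT}) (Lambda : {set {set gT}}) : {set cosX G K} :=
  [set A : cosX G K | repr (val A) \in dunion Lambda].

End GelfandDefs.

(* Main.v *)
Require Import Defs.
From HB Require Import structures.
From mathcomp Require Import all_boot all_order all_algebra all_fingroup all_field.
From mathcomp Require Import ring.
Import GRing.Theory Num.Theory.
Local Open Scope ring_scope.

Section Mx.
Local Open Scope sesquilinear_scope.

Lemma tr_nnorm p n (A : 'M[algC]_(p,n)) :
  \tr (A *m A ^t*) = \sum_i \sum_j `|A i j| ^+ 2.
Proof.
rewrite /mxtrace; apply: eq_bigr => i _; rewrite mxE; apply: eq_bigr => j _.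
by rewrite !mxE normCK.
Qed.

Lemma tr_nnorm_ge0 p n (A : 'M[algC]_(p,n)) : 0 <= \tr (A *m A ^t*).
Proof.
by rewrite tr_nnorm; apply: sumr_ge0 => i _; apply: sumr_ge0 => j _; apply: exprn_ge0.
Qed.

Lemma trCt m n p (A : 'M[algC]_(m,n)) (B : 'M[algC]_(n,p)) :
  (A *m B)^t* = B^t* *m A^t*.
Proof. by rewrite trmx_mul map_mxM. Qed.

Lemma frob_bound n d (M : 'M[algC]_n) (B : 'M[algC]_(d,n)) eta :
  row_free B -> B *m M = eta *: B -> d%:R * `|eta| ^+ 2 <= \tr (M *m M^t*).
Proof.
move=> hB hE.
have dn : (d <= n)%N.
  by rewrite (leq_trans _ (rank_leq_col B)) // row_leq_rank.
set U := schmidt B.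
have /unitarymxP Uu : U \is unitarymx by exact: schmidt_unitarymx.
have UB : (U <= B)%MS by rewrite eqmx_schmidt_free.
have UM : U *m M = eta *: U.
  have K := mulmxKpV UB.
  set W := U *m pinvmx B in K *.
  by rewrite -{1}K -mulmxA hE -scalemxAr K.
set P := U^t* *m U.
have Ph : P^t* = P by rewrite /P trCt trmxCK.
have PP : P *m P = P by rewrite /P mulmxA -(mulmxA _ U) Uu mulmx1.
set X := M *m M^t*.
set N := (1%:M - P) *m M.
have Q : (1%:M - P)^t* *m (1%:M - P) = 1%:M - P.
    rewrite [(_ - _)^T]linearB /= map_mxB trmx1 map_mx1 Ph.
    by rewrite mulmxBl !mul1mx mulmxBr mulmx1 PP subrr subr0.
have e1 : \tr (N *m N^t*) = \tr X - \tr (X *m P).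
  rewrite /N trCt mxtrace_mulC mulmxA -(mulmxA (M^t*)) Q mxtrace_mulC mulmxA.
  by rewrite mulmxBr mulmx1 linearB.
have e2 : \tr (X *m P) = d%:R * `|eta| ^+ 2.
  rewrite /P mulmxA mxtrace_mulC !mulmxA -(mulmxA U) -/X /X mulmxA UM.
  rewrite -mulmxA -trCt UM.
  have -> : (eta *: U)^t* = eta^* *: U^t*.
    by apply/matrixP => i j; rewrite !mxE rmorphM.
  rewrite -scalemxAr -scalemxAl Uu !linearZ /= mxtrace1.
  by rewrite normCK; ring.
by move: (@tr_nnorm_ge0 _ _ N); rewrite e1 subr_ge0 e2.
Qed.
End Mx.
Section Grp.
Variables (gT : finGroupType) (G K : {group gT}).
Hypothesis sKG : K \subset G.

Lemma cosX_repr (A : cosX G K) :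
  val A = (repr (val A) *: K)%g /\ repr (val A) \in G.
Proof.
have /lcosetsP [y yG ->] := valP A.
have r : repr (y *: K)%g \in (y *: K)%g := mem_repr _ (lcoset_refl K y).
split; first by apply/esym/lcoset_eqP.
case/lcosetP: r => k kK ->; rewrite groupM //; exact: (subsetP sKG).
Qed.

Lemma val_actX g (A : cosX G K) : g \in G -> val (Defs.actX g A) = (g *: val A)%g.
Proof.
move=> gG; rewrite /actX val_insubd.
have [_ rG] := cosX_repr A.
have -> : (g *: val A \in lcosets K G)%g.
  by rewrite (proj1 (cosX_repr A)) -lcosetM; apply/lcosetsP; exists (g * repr (val A))%g; rewrite ?groupM.
by [].
Qed.

Lemma actX_inj g : g \in G -> injective (@Defs.actX gT G K g).
Proof.
move=> gG A B /(congr1 val); rewrite !val_actX // => /lcoset_inj; exact: val_inj.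
Qed.

Lemma Du_K (Lambda : {set {set gT}}) z k :
  Lambda \subset dcosets G K -> k \in K ->
  (z * k \in dunion Lambda)%g = (z \in dunion Lambda).
Proof.
move=> sL kK.
suff H : forall z k, k \in K -> z \in dunion Lambda -> (z * k)%g \in dunion Lambda.
  apply/idP/idP; last exact: H.
  by move/(H _ (k^-1)%g); rewrite groupV mulgK; apply.
rewrite /dunion => {}z {}k {}kK /bigcupP [D DL zD]; apply/bigcupP; exists D => //.
have /imsetP [x _ eD] := subsetP sL D DL.
rewrite eD in zD *.
case/mulsgP: zD => a b aK bK ->.
by rewrite -mulgA; apply: mem_mulg => //; rewrite groupM.
Qed.

Lemma row_count (Lambda : {set {set gT}}) x :
  Lambda \subset dcosets G K -> x \in G ->
  \sum_(A : cosX G K) ((x^-1 * repr (val A))%g \in dunion Lambda)%:R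
    = #|OmegaL G K Lambda|%:R :> algC.
Proof.
move=> sL xG.
rewrite (reindex_inj (actX_inj x xG)).
transitivity (\sum_(A : cosX G K) (repr (val A) \in dunion Lambda)%:R : algC).
  apply: eq_bigr => A _; congr (_ %:R); congr (nat_of_bool _).
  have [eA rG] := cosX_repr A.
  rewrite val_actX // {1}eA -lcosetM.
  have r : repr ((x * repr (val A)) *: K)%g \in ((x * repr (val A)) *: K)%g.
    exact: mem_repr _ (lcoset_refl K _).
  case/lcosetP: r => k kK ->.
  by rewrite mulgA mulKg (Du_K _ _ _ sL kK).
have -> : #|OmegaL G K Lambda| = (\sum_(A in OmegaL G K Lambda) 1)%N by rewrite sum1_card.
rewrite natr_sum [RHS]big_mkcond /=; apply: eq_bigr => A _.
by rewrite inE; case: (_ \in _).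
Qed.
End Grp.

Local Open Scope sesquilinear_scope.

Theorem mainTheorem18 (gT : finGroupType) (G K : {group gT})
    (m : nat) (Vs : 'I_m -> {vspace CX G K})
    (sKG : K \subset G) (decV : multfree_decomposition Vs)
    (Lambda : {set {set gT}}) (sLambda : Lambda \subset dcosets G K)
    (i : 'I_m) (eta : algC)
    (eigen : forall f, f \in Vs i -> Gamma_act Lambda f = eta *: f) :
  `|eta| <= sqrtC (#|cosX G K|%:R * #|OmegaL G K Lambda|%:R
                    / (\dim (Vs i))%:R).
Proof.
case: decV => _ _ irr _.
have [V0 _ _] := irr i.
set V := Vs i in eigen V0 *.
set d := \dim V.
set n := #|cosX G K|.
have d0 : (0 < d)%N by rewrite lt0n dimv_eq0.
set bs := vbasis V.
have bsV : forall k : 'I_d, bs`_k \in V.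
  by move=> k; apply: vbasis_mem; apply: mem_nth; rewrite size_tuple.
pose B : 'M[algC]_(d, n) := \matrix_(k, j) (bs`_k (enum_val j) : algC).
pose M : 'M[algC]_n := (Gamma G K Lambda)^T.
have sumI : forall F : cosX G K -> algC,
    \sum_(l < n) F (enum_val l) = \sum_(A : cosX G K) F A.
  move=> F; rewrite (reindex (@enum_rank (cosX G K))) /=.
    by apply: eq_bigr => A _; rewrite enum_rankK.
  by exists enum_val => A _; rewrite ?enum_rankK ?enum_valK.
have hE : B *m M = eta *: B.
  apply/matrixP => k j; rewrite !mxE.
  have := congr1 (fun f : CX G K => f (enum_val j)) (eigen _ (bsV k)).
  rewrite /Gamma_act /= !ffunE => H.
  transitivity (eta *: bs`_k (enum_val j)); last by [].
  rewrite -H -sumI; apply: eq_bigr => l _; rewrite !mxE !enum_valK mulrC.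
  by [].
have hB : row_free B.
  apply/inj_row_free => v hv.
  have f0 : \sum_(k < d) v 0 k *: bs`_k = 0.
    apply/ffunP => A; rewrite sum_ffunE ffunE.
    have := congr1 (fun X : 'rV_n => X 0 (enum_rank A)) hv; rewrite !mxE => e.
    apply: (etrans _ e).
    by apply: eq_bigr => k _; rewrite ffunE mxE enum_rankK.
  move/freeP: (basis_free (vbasisP V)) => /(_ (fun k => v 0 k) f0) h.
  by apply/rowP => k; rewrite mxE h.
have hF : \tr (M *m M^t*) = n%:R * #|OmegaL G K Lambda|%:R.
  rewrite tr_nnorm exchange_big /=.
  transitivity (\sum_(b < n) (#|OmegaL G K Lambda|%:R : algC)); last first.
    by rewrite sumr_const card_ord mulr_natl.
  apply: eq_bigr => b _.
  have [_ rG] := @cosX_repr _ _ _ sKG (enum_val b).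
  rewrite -(@row_count _ _ _ sKG _ _ sLambda rG) -sumI.
  apply: eq_bigr => a _; rewrite !mxE.
  by case: (_ \in _); rewrite ?normr1 ?normr0 ?expr1n ?expr0n.
have key := @frob_bound _ _ _ _ _ hB hE; rewrite hF in key.
rewrite -(sqrCK (normr_ge0 eta)) ler_sqrtC; last 2 first.
- by rewrite qualifE /= exprn_ge0.
- by rewrite qualifE /= divr_ge0 // mulr_ge0.
by rewrite ler_pdivlMr ?ltr0n // mulrC.
Qed.
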